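(* Let $r\geqslant 3$ be an odd integer and let $\Gamma\cong\mathbb{Z}_{2r}\oplus\mathbb{Z}_2\oplus\mathbb{Z}_4$. Then there exists an $\mathrm{MRS}_\Gamma(r,8;2)$ in which every row sum and every column sum equals $0_\Gamma$.
   Context: For an abelian group $\Gamma$ of order $abc$, an $\mathrm{MRS}_\Gamma(a,b;c)$ is a collection of $c$ arrays of size $a\times b$ whose entries are the elements of $\Gamma$, each appearing exactly once and in a unique array, such that there are $\omega,\delta\in\Gamma$ with every row sum (in every array) equal to $\omega$ and every column sum (in every array) equal to $\delta$. *)

(* Defs.v *)
From mathcomp Require Import all_boot all_order all_algebra.
Set Implicit Arguments. Unset Strict Implicit. Unset Printing Implicit Defensive.
Import GRing.Theory.
Local Open Scope ring_scope.

(* The abelian group Z_{2r} (+) Z_2 (+) Z_4, as a product of zmodTypes.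
   For r >= 1, 2r >= 2, so 'Z_(2r) really is Z/2rZ. *)
Notation Gam r :=
  (('Z_(2 * r) * 'Z_2 * 'Z_4)%type).

(* An MRS_G(a,b;c): c arrays of size a x b, A k i j being the entry in row i,
   column j of array k; every element of G occurs exactly once overall
   (A is a bijection from positions to G); all row sums equal omega and all
   column sums equal delta. *)
Definition is_MRS (G : zmodType) (a b c : nat)
    (A : 'I_c -> 'I_a -> 'I_b -> G) (omega delta : G) : Prop :=
  bijective (fun p : 'I_c * 'I_a * 'I_b => A p.1.1 p.1.2 p.2) /\
  (forall k i, \sum_(j < b) A k i j = omega) /\
  (forall k j, \sum_(i < a) A k i j = delta).

(* Main.v *)
Require Import Defs.
From mathcomp Require Import all_boot all_order all_algebra.
From mathcomp Require Import zify.
Set Implicit Arguments. Unset Strict Implicit. Unset Printing Implicit Defensive.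
Import GRing.Theory.
Local Open Scope ring_scope.

Notation K := ('Z_2 * 'Z_2 * 'Z_4)%type.
Definition ta : seq (nat*nat*nat) := [:: (1, 1, 1); (0, 1, 3); (0, 0, 1); (1, 1, 0); (0, 1, 1); (1, 0, 0); (0, 1, 0); (1, 1, 2); (1, 1, 3); (0, 0, 3); (0, 0, 0); (1, 0, 3); (1, 0, 1); (0, 0, 2); (0, 1, 2); (1, 0, 2)]%N.
Definition tb : seq (nat*nat*nat) := [:: (1, 0, 0); (0, 1, 1); (1, 0, 2); (1, 0, 3); (0, 1, 2); (1, 1, 2); (0, 0, 0); (0, 0, 3); (1, 1, 3); (1, 1, 1); (1, 0, 1); (0, 1, 0); (0, 0, 1); (1, 1, 0); (0, 1, 3); (0, 0, 2)]%N.
Definition tc : seq (nat*nat*nat) := [:: (0, 1, 3); (0, 0, 0); (1, 0, 1); (0, 1, 1); (0, 0, 1); (0, 1, 2); (0, 1, 0); (1, 1, 3); (0, 0, 2); (1, 1, 0); (1, 0, 3); (1, 1, 1); (1, 0, 2); (1, 1, 2); (0, 0, 3); (1, 0, 0)]%N.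
Definition tg : seq (nat*nat*nat) := [:: (0, 0, 0); (0, 0, 1); (0, 0, 2); (0, 0, 3); (0, 1, 0); (0, 1, 1); (0, 1, 2); (0, 1, 3); (1, 0, 0); (1, 0, 1); (1, 0, 2); (1, 0, 3); (1, 1, 0); (1, 1, 1); (1, 1, 2); (1, 1, 3)]%N.

Definition tnat (t : seq (nat*nat*nat)) (n : nat) : K :=
  let: (b, c, d) := nth (0, 0, 0)%N t n in (b%:R, c%:R, d%:R).

Lemma uniq_tabs : [&& uniq [seq tnat ta n | n <- iota 0 16],
  uniq [seq tnat tb n | n <- iota 0 16],
  uniq [seq tnat tc n | n <- iota 0 16] &
  uniq [seq tnat tg n | n <- iota 0 16]].
Proof. reflexivity. Qed.

Lemma col_tab : all (fun n => tnat ta n + tnat tb n + tnat tc n == 0) (iota 0 16).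
Proof. reflexivity. Qed.

Lemma row_tabs (k : nat) : (k < 2)%N ->
  [&& \sum_(0 <= j < 8) tnat ta (8 * k + j) == 0,
      \sum_(0 <= j < 8) (if (j < 4)%N then tnat tb (8 * k + j) else tnat tc (8 * k + j)) == 0,
      \sum_(0 <= j < 8) (if (j < 4)%N then tnat tc (8 * k + j) else tnat tb (8 * k + j)) == 0 &
      \sum_(0 <= j < 8) (if (j < 4)%N then tnat tg (8 * k + j) else - tnat tg (8 * k + j)) == 0].
Proof. case: k => [|[|//]] _; rewrite unlock; reflexivity. Qed.

Section W.
Variable r : nat.
Hypothesis r_gt1 : (1 < 2 * r)%N.

Lemma Zr_nat_eq (x y : nat) : ((x%:R : 'Z_(2 * r)) = y%:R) -> (x %% (2 * r) = y %% (2 * r))%N.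
Proof. by move=> /(congr1 val); rewrite /= !val_Zp_nat. Qed.

Lemma Zr_nat0 (x : nat) : (2 * r %| x)%N -> (x%:R : 'Z_(2 * r)) = 0.
Proof.
move=> /dvdnP [q ->]; apply: val_inj; rewrite /= val_Zp_nat // modnMl.
by [].
Qed.

Definition psi (b : 'Z_2) : 'Z_(2 * r) := (r * b)%:R.

Lemma psi0 : psi 0 = 0. Proof. by rewrite /psi /= muln0. Qed.

Lemma psiD b1 b2 : psi (b1 + b2) = psi b1 + psi b2.
Proof.
rewrite /psi -natrD -mulnDr.
case: b1 => [[|[|//]] ?]; case: b2 => [[|[|//]] ?] //=.
rewrite (@Zr_nat0 (r * (1 + 1))) //.
  by have -> : ((1 + 1) %% (Zp_trunc 2).+2 = 0)%N by []; rewrite muln0.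
by rewrite mulnC; exact: dvdnn.
Qed.

Definition Phi (x : K) : Gam r := (psi x.1.1, x.1.2, x.2).
Lemma Phi0 : Phi 0 = 0. Proof. by rewrite /Phi /= psi0. Qed.
Lemma PhiD x y : Phi (x + y) = Phi x + Phi y.
Proof. by rewrite /Phi /= psiD. Qed.
Lemma Phi_sum I (s : seq I) (P : pred I) (F : I -> K) :
  Phi (\sum_(i <- s | P i) F i) = \sum_(i <- s | P i) Phi (F i).
Proof. exact: (big_morph Phi PhiD Phi0). Qed.

Definition inl1 (x : 'Z_(2 * r)) : Gam r := (x, 0, 0).
Lemma inl1_sum I (s : seq I) (P : pred I) (F : I -> 'Z_(2 * r)) :
  inl1 (\sum_(i <- s | P i) F i) = \sum_(i <- s | P i) inl1 (F i).
Proof. apply: (big_morph inl1) => //= x y. by rewrite /inl1; congr (_, _, _); rewrite /= addr0. Qed.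


End W.

Lemma tab_inj t n m : uniq [seq tnat t n | n <- iota 0 16] -> (n < 16)%N -> (m < 16)%N ->
  tnat t n = tnat t m -> n = m.
Proof.
move=> u hn hm e.
have := @nth_uniq _ (tnat t 0) _ n m _ _ u.
rewrite size_map size_iota => /(_ hn hm).
rewrite !(nth_map 0%N) ?size_iota // !nth_iota // !add0n e eqxx.
by move=> /esym /eqP.
Qed.

Definition Pi (r z k j : nat) : K :=
  let n := (8 * k + j)%N in
  if z == 0%N then tnat ta n else if z == 1%N then tnat tb n
  else if z == r.-1 then tnat tc n else if odd z then tnat tg n else - tnat tg n.

Lemma idx_inj (k k' : 'I_2) (j j' : 'I_8) : (8 * k + j = 8 * k' + j')%N -> k = k' /\ j = j'.
Proof.
case: k => k hk; case: k' => k' hk'; case: j => j hj; case: j' => j' hj' /= e.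
have ek : k = k' by lia.
have ej : j = j' by lia.
by subst; split; apply: val_inj.
Qed.

Lemma Pi_inj r z (k k' : 'I_2) (j j' : 'I_8) : Pi r z k j = Pi r z k' j' -> k = k' /\ j = j'.
Proof.
have [ua /and3P [ub uc ug]] := andP uniq_tabs.
have hn : forall (k : 'I_2) (j : 'I_8), (8 * k + j < 16)%N.
  by move=> [a ha] [b hb] /=; lia.
move=> e; apply: idx_inj; move: e; rewrite /Pi.
case: ifP => _; first exact: tab_inj.
case: ifP => _; first exact: tab_inj.
case: ifP => _; first exact: tab_inj.
case: ifP => _; first exact: tab_inj.
by move/oppr_inj; exact: tab_inj.
Qed.

Lemma key_inj r m (hr : r = (2 * m + 3)%N) z z' (b b' : 'Z_2) :
  (z < r)%N -> (z' < r)%N ->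
  ((2 * z)%:R : 'Z_(2 * r)) + psi r b = (2 * z')%:R + psi r b' -> z = z' /\ b = b'.
Proof.
move=> hz hz'; rewrite /psi -!natrD => /Zr_nat_eq.
have r1 : (1 < 2 * r)%N by lia.
move=> /(_ r1) e.
have e2 := congr1 (fun x => x %% 2)%N e; rewrite /= !modn_dvdm ?dvdn_mulr // in e2.
have bb : b = b'.
  apply: val_inj; move: e2; case: b {e} => [[|[|//]] ?]; case: b' => [[|[|//]] ?] /=; lia.
subst b'; split => //.
move: e; rewrite -!(addnC (r * b)) => /eqP; rewrite eqn_modDl => /eqP.
rewrite !modn_small; lia.
Qed.

Definition zz (r i j : nat) : nat := if (j < 4)%N then i else ((r - i) %% r)%N.

Lemma modr_sub r i : (i < r)%N -> ((r - i) %% r = if i == 0%N then 0 else r - i)%N.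
Proof.
move=> hi; case: eqP => [->|ni]; first by rewrite subn0 modnn.
rewrite modn_small //; lia.
Qed.

Lemma zz_lt r i j : (i < r)%N -> (zz r i j < r)%N.
Proof. move=> hi; rewrite /zz; case: ifP => // _; rewrite modr_sub //; case: eqP; lia. Qed.

Lemma zz_inj r i i' j : (i < r)%N -> (i' < r)%N -> zz r i j = zz r i' j -> i = i'.
Proof. move=> hi hi'; rewrite /zz; case: ifP => // _; rewrite !modr_sub //; do 2 case: eqP; lia. Qed.

Lemma zz_neg r i j : (1 < r)%N -> (i < r)%N -> (4 <= j)%N ->
  ((2 * zz r i j)%:R : 'Z_(2 * r)) = - (2 * i)%:R.
Proof.
move=> r1 hi hj; rewrite /zz ltnNge hj /= modr_sub //.
case: eqP => [->|ni]; first by rewrite muln0 oppr0.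
apply/eqP; rewrite -subr_eq0 opprK -natrD; apply/eqP; apply: Zr_nat0; first lia.
apply/dvdnP; exists 1%N; lia.
Qed.

Lemma zz_pos r i j : (j < 4)%N -> zz r i j = i.
Proof. by rewrite /zz => ->. Qed.

Definition Aent r (k : 'I_2) (i : 'I_r) (j : 'I_8) : Gam r :=
  inl1 ((2 * zz r i j)%:R : 'Z_(2 * r)) + Phi r (Pi r (zz r i j) k j).

Lemma Aent_inj r m (hr : r = (2 * m + 3)%N) :
  injective (fun p : 'I_2 * 'I_r * 'I_8 => Aent p.1.1 p.1.2 p.2).
Proof.
move=> [[k i] j] [[k' i'] j'] /=; rewrite /Aent /inl1 /Phi => e.
have e1 := congr1 (fun p => p.1.1) e.
have e2 := congr1 (fun p => p.1.2) e.
have e3 := congr1 (fun p => p.2) e.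
simpl in e1, e2, e3.
rewrite !add0r in e2 e3.
have [ez eb] := key_inj hr (zz_lt j (ltn_ord i)) (zz_lt j' (ltn_ord i')) e1.
have eP : Pi r (zz r i j) k j = Pi r (zz r i' j') k' j'.
  by move: eb e2 e3; case: (Pi _ _ k j) => [[? ?] ?]; case: (Pi _ _ k' j') => [[? ?] ?] /= -> -> ->.
rewrite -ez in eP; have [ek ej] := Pi_inj eP.
subst k' j'.
have ei : i = i' by apply: val_inj; exact: zz_inj ez.
by subst.
Qed.

Lemma alt8 (V : zmodType) (a : V) : \sum_(j < 8) (if (j < 4)%N then a else - a) = 0.
Proof.
rewrite -(big_mkord xpredT (fun j => if (j < 4)%N then a else - a)) unlock /=.
by rewrite addr0 !addrA !addrK subrr.
Qed.

Lemma altmid (V : zmodType) (x : V) a m :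
  \sum_(a <= i < a + 2 * m) (if odd i then x else - x) = 0.
Proof.
elim: m => [|m IH]; first by rewrite muln0 addn0 big_geq.
have -> : (a + 2 * m.+1 = (a + 2 * m).+2)%N by lia.
rewrite big_nat_recr /=; last lia.
rewrite big_nat_recr /=; last lia.
rewrite IH add0r /=; case: (odd _) => /=; by rewrite ?subrr ?addNr.
Qed.

Lemma sum2i r : (\sum_(i < r) (2 * i) = r * r.-1)%N.
Proof.
elim: r => [|r IH]; first by rewrite big_ord0.
rewrite big_ord_recr /= IH; case: r {IH} => [|r] /=; lia.
Qed.

Lemma Aent_split r (r1 : (1 < 2 * r)%N) (k : 'I_2) I (s : seq I) (Q : pred I) (f : I -> 'I_r) (g : I -> 'I_8) :
  \sum_(x <- s | Q x) Aent k (f x) (g x) =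
  inl1 (\sum_(x <- s | Q x) ((2 * zz r (f x) (g x))%:R : 'Z_(2 * r)))
  + Phi r (\sum_(x <- s | Q x) Pi r (zz r (f x) (g x)) k (g x)).
Proof. by rewrite /Aent big_split /= inl1_sum Phi_sum. Qed.

Lemma Pi0 r k j : Pi r 0 k j = tnat ta (8 * k + j). Proof. by []. Qed.
Lemma Pi1 r k j : Pi r 1 k j = tnat tb (8 * k + j). Proof. by []. Qed.
Lemma Pilast r k j : (2 < r)%N -> Pi r r.-1 k j = tnat tc (8 * k + j).
Proof.
move=> h; rewrite /Pi eqxx.
have -> : (r.-1 == 0%N) = false by apply/eqP; lia.
by have -> : (r.-1 == 1%N) = false by apply/eqP; lia.
Qed.
Lemma Pimid r z k j : z != 0%N -> z != 1%N -> z != r.-1 ->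
  Pi r z k j = if odd z then tnat tg (8 * k + j) else - tnat tg (8 * k + j).
Proof. by move=> /negPf h0 /negPf h1 /negPf h2; rewrite /Pi h0 h1 h2. Qed.

Lemma row_sum r m (hr : r = (2 * m + 3)%N) k (i : 'I_r) : \sum_(j < 8) Aent k i j = 0.
Proof.
have r1 : (1 < r)%N by lia.
have r2 : (1 < 2 * r)%N by lia.
rewrite (Aent_split r2 k (index_enum _) xpredT (fun _ => i) id).
have hi := ltn_ord i.
have -> : \sum_(j < 8) ((2 * zz r i j)%:R : 'Z_(2 * r)) =
          \sum_(j < 8) (if (j < 4)%N then (2 * i)%:R else - (2 * i)%:R).
  apply: eq_bigr => j _; case: ifP => hj; first by rewrite zz_pos.
  by rewrite zz_neg // leqNgt hj.
rewrite alt8.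
have hk := ltn_ord k.
have [ha /and3P [hb hc hg]] := andP (row_tabs hk).
suff -> : \sum_(j < 8) Pi r (zz r i j) k j = 0.
  by rewrite Phi0 // addr0.
rewrite /zz modr_sub //.
have r3 : (2 < r)%N by lia.
have [e0|i0] := eqVneq (i : nat) 0%N.
  rewrite (eq_bigr (fun j : 'I_8 => tnat ta (8 * k + j))); last first.
    by move=> j _; rewrite e0 /=; case: ifP.
  by rewrite -(big_mkord xpredT (fun j => tnat ta (8 * k + j))); apply/eqP.
have [e1|i1] := eqVneq (i : nat) 1%N.
  rewrite (eq_bigr (fun j : 'I_8 => if (j < 4)%N then tnat tb (8 * k + j) else tnat tc (8 * k + j))); last first.
    move=> j _; rewrite e1 /=; case: ifP => _; first by [].
    have -> : (r - 1 = r.-1)%N by lia.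
    by rewrite Pilast.
  by rewrite -(big_mkord xpredT (fun j => if (j < 4)%N then tnat tb (8 * k + j) else tnat tc (8 * k + j))); apply/eqP.
have [el|il] := eqVneq (i : nat) r.-1.
  rewrite (eq_bigr (fun j : 'I_8 => if (j < 4)%N then tnat tc (8 * k + j) else tnat tb (8 * k + j))); last first.
    move=> j _; rewrite el /=; case: ifP => _; first by rewrite Pilast.
    have -> : (r - r.-1 = 1)%N by lia.
    by [].
  by rewrite -(big_mkord xpredT (fun j => if (j < 4)%N then tnat tc (8 * k + j) else tnat tb (8 * k + j))); apply/eqP.
have hodd : odd (r - i) = ~~ odd i.
  have or : odd r by rewrite hr oddD oddM.
  by rewrite oddB ?(ltnW hi) // or.
have n0 : (r - i != 0)%N by apply/eqP; lia.
have n1 : (r - i != 1)%N by apply/eqP; lia.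
have nl : (r - i != r.-1)%N by apply/eqP; lia.
set g := fun j : nat => tnat tg (8 * k + j).
rewrite (eq_bigr (fun j : 'I_8 => (if odd i then 1 else -1) * (if (j < 4)%N then g j else - g j))); last first.
  move=> j _; case: ifP => _.
    by rewrite Pimid //; case: (odd i); rewrite ?mul1r ?mulN1r.
  by rewrite Pimid // hodd; case: (odd i); rewrite /= ?mul1r ?mulN1r ?opprK.
rewrite -mulr_sumr -(big_mkord xpredT (fun j => if (j < 4)%N then g j else - g j)).
by rewrite (eqP hg) mulr0.
Qed.

Lemma col_sum r m (hr : r = (2 * m + 3)%N) (k : 'I_2) (j : 'I_8) : \sum_(i < r) Aent k i j = 0.
Proof.
have r1 : (1 < r)%N by lia.
have r2 : (1 < 2 * r)%N by lia.
rewrite (Aent_split r2 k (index_enum _) xpredT id (fun _ => j)).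
have Z0 : \sum_(i < r) ((2 * i)%:R : 'Z_(2 * r)) = 0.
  rewrite -natr_sum sum2i Zr_nat0 //; apply/dvdnP; exists (m + 1)%N.
  rewrite hr; nia.
have -> : \sum_(i < r) ((2 * zz r i j)%:R : 'Z_(2 * r)) = 0.
  case: (ltnP j 4) => hj.
    by rewrite (eq_bigr (fun i : 'I_r => (2 * i)%:R)) // => i _; rewrite zz_pos.
  rewrite (eq_bigr (fun i : 'I_r => - (2 * i)%:R)) ?sumrN ?Z0 ?oppr0 //.
  by move=> i _; rewrite zz_neg.
rewrite -(big_mkord xpredT (fun i => Pi r (zz r i j) k j)).
have E : r = (2 * m + 2).+1 by lia.
rewrite big_ltn; last lia.
rewrite big_ltn; last lia.
have -> : \sum_(2 <= i < r) Pi r (zz r i j) k j = \sum_(2 <= i < (2 * m + 2).+1) Pi r (zz r i j) k j.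
  by rewrite -E.
rewrite big_nat_recr /=; last lia.
have r3 : (2 < r)%N by lia.
set g := tnat tg (8 * k + j).
have -> : \sum_(2 <= i < 2 * m + 2) Pi r (zz r i j) k j =
          (if (j < 4)%N then 1 else -1) * \sum_(2 <= i < 2 + 2 * m) (if odd i then g else - g).
  rewrite mulr_sumr (addnC 2%N); apply: eq_big_nat => i /andP [i2 i3].
  have n0 : (i != 0)%N by apply/eqP; lia.
  have n1 : (i != 1)%N by apply/eqP; lia.
  have nl : (i != r.-1)%N by apply/eqP; lia.
  have hodd : odd (r - i) = ~~ odd i.
    have or : odd r by rewrite hr oddD oddM.
    by rewrite oddB ?or //; lia.
  have m0 : (r - i != 0)%N by apply/eqP; lia.
  have m1 : (r - i != 1)%N by apply/eqP; lia.
  have ml : (r - i != r.-1)%N by apply/eqP; lia.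
  rewrite /zz; case: ifP => _; first by rewrite Pimid // mul1r.
  rewrite modr_sub; last lia.
  rewrite (negPf n0) Pimid // hodd mulN1r.
  by case: (odd i); rewrite /= ?opprK.
rewrite altmid mulr0 add0r.
have hn : (8 * k + j < 16)%N by move: (ltn_ord k) (ltn_ord j); lia.
have := allP col_tab _ (_ : (8 * k + j)%N \in iota 0 16); rewrite mem_iota /= => /(_ hn) /eqP.
rewrite /zz !modr_sub //= ?add0r; last lia.
have -> : (r - (2 * m + 2) = 1)%N by lia.
have -> : (2 * m + 2 = r.-1)%N by lia.
have -> : (r.-1 == 0)%N = false by apply/eqP; lia.
have -> : (r - 1 = r.-1)%N by lia.
rewrite if_same Pi0 => H.
case: ifP => _; rewrite Pilast // Pi1.
  by rewrite addrA H Phi0 // addr0.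
by rewrite (addrC (tnat tc _)) addrA H Phi0 // addr0.
lia.
Qed.

Theorem lemma4p9 (r : nat) (hr3 : (3 <= r)%N) (hodd : odd r) :
  exists A : 'I_2 -> 'I_r -> 'I_8 -> Gam r, is_MRS A 0 0.
Proof.
have hr : r = (2 * (r./2 - 1) + 3)%N.
  have := odd_double_half r; rewrite hodd -muln2 /=; lia.
exists (@Aent r); split; last split.
- apply: inj_card_bij; first exact: (Aent_inj hr).
  rewrite !card_prod !card_ord Zp_cast; last lia.
  rewrite /Zp_trunc /=; lia.
- by move=> k i; exact: (row_sum hr).
- by move=> k j; exact: (col_sum hr).
Qed.
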